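(* Let $r$ be a positive integer and $k,a\in\mathbb{K}$. Then $$\frac{d^{r+1}}{dx^{r+1}}\left[x^r\left(\frac{x}{x-a}\right)^k\right]=(-a)^{r+1}k^{(r+1)}\frac{x^{k-1}}{(x-a)^{k+r+1}}.$$
   Context: $\mathbb{K}\in\{\mathbb{Q},\mathbb{R},\mathbb{C}\}$. $k^{(n)}=k(k+1)\cdots(k+n-1)$ is the rising Pochhammer symbol. The identity is understood in formal Laurent series in $x^{-1}$: $\left(\frac{x}{x-a}\right)^k:=(1-a/x)^{-k}=\sum_{i\ge0}\binom{-k}{i}(-a/x)^i$ (binomial series), and $\frac{x^{k-1}}{(x-a)^{k+r+1}}:=x^{-r-2}(1-a/x)^{-k-r-1}$, with termwise differentiation. *)

(* Defs.v *)
From mathcomp Require Import all_boot all_order all_algebra.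
Set Implicit Arguments. Unset Strict Implicit. Unset Printing Implicit Defensive.
Import Order.TTheory GRing.Theory Num.Theory.
Local Open Scope ring_scope.

(* A formal Laurent series in x^{-1} (finitely many positive powers of x) is
   represented by its coefficient function: f n = coefficient of x^n, n : int. *)
Definition lseries (K : Type) := int -> K.

Definition gbinom (K : fieldType) (c : K) (i : nat) : K :=
  (\prod_(j < i) (c - j%:R)) / (i`!)%:R.

Definition rising (K : ringType) (k : K) (n : nat) : K :=
  \prod_(j < n) (k + j%:R).

(* The series x^s * (1 - a/x)^e := sum_{i>=0} binom(e,i) (-a/x)^i x^s
   (binomial series); coefficient of x^n is binom(e, s-n) (-a)^(s-n) for n <= s. *)
Definition xpow_binser (K : fieldType) (s : int) (e a : K) : lseries K :=
  fun n => match (s - n)%R with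
           | Posz i => gbinom e i * (- a) ^+ i
           | Negz _ => 0
           end.

Definition lderiv (K : ringType) (f : lseries K) : lseries K :=
  fun n => (n + 1)%:~R * f (n + 1).

Definition lscale (K : ringType) (c : K) (f : lseries K) : lseries K :=
  fun n => c * f n.

(* Main.v *)
Require Import Defs.
From mathcomp Require Import all_boot all_order all_algebra.
From mathcomp Require Import zify ring.
Import Order.TTheory GRing.Theory Num.Theory.
Local Open Scope ring_scope.

Lemma iter_lderiv (K : numFieldType) (m : nat) (f : lseries K) (n : int) :
  iter m (@lderiv K) f n = (\prod_(j < m) ((n + (j.+1)%:Z)%:~R : K)) * f (n + m%:Z).
Proof.
elim: m n => [|m IH] n; first by rewrite big_ord0 mul1r addr0.
rewrite iterS /lderiv IH big_ord_recl mulrA; congr (_ * _ * _).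
- apply: eq_bigr => j _; apply: congr1; rewrite lift0 /=; lia.
- congr f; lia.
Qed.

Lemma fact_prod (m i : nat) : ((\prod_(j < m) (m + i - j)) * i`!)%N = (m + i)`!.
Proof.
elim: m => [|m IH]; first by rewrite big_ord0 mul1n.
rewrite big_ord_recl subn0 -mulnA.
have -> : (\prod_(j < m) (m.+1 + i - bump 0 j) = \prod_(j < m) (m + i - j))%N.
  by apply: eq_bigr => j _; rewrite /bump /= addSn subSS.
by rewrite IH addSn factS.
Qed.

Lemma gbinomN (K : numFieldType) (c : K) j :
  gbinom (- c) j = (-1) ^+ j * rising c j / (j`!)%:R.
Proof.
rewrite /gbinom /rising; congr (_ / _).
transitivity (\prod_(u < j) - (c + u%:R)).
  by apply: eq_bigr => u _; rewrite opprD.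
by rewrite prodrN card_ord.
Qed.

Lemma risingD (K : numFieldType) (c : K) m i :
  rising c (m + i) = rising c m * rising (c + m%:R) i.
Proof.
rewrite /rising big_split_ord /=; congr (_ * _); apply: eq_bigr => j _ //=.
by rewrite natrD addrA.
Qed.
From Stdlib Require Import FunctionalExtensionality.

Theorem lemma4p5 (K : numFieldType) (r : nat) (hr : (0 < r)%N) (k a : K) :
  iter r.+1 (@lderiv K) (xpow_binser (Posz r) (- k) a)
  = lscale ((- a) ^+ r.+1 * rising k r.+1)
      (xpow_binser (- (Posz r + 2)) (- (k + r%:R + 1)) a).
Proof.
apply: functional_extensionality => n.
rewrite iter_lderiv /lscale /xpow_binser.
have -> : Posz r - (n + Posz r.+1) = - n - 1 by lia.
case: n => p.
  have -> : - Posz p - 1 = Negz p by rewrite NegzE; lia.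
  have -> : - (Posz r + 2) - Posz p = Negz (r.+1 + p) by rewrite NegzE; lia.
  by rewrite !mulr0.
have -> : - Negz p - 1 = Posz p by rewrite NegzE; lia.
case: (ltnP p r.+1) => hp.
  have -> : - (Posz r + 2) - Negz p = Negz (r - p) by rewrite NegzE; lia.
  rewrite mulr0 (bigD1 (Ordinal hp)) //= .
  have -> : Negz p + Posz p.+1 = 0 by rewrite NegzE; lia.
  by rewrite mul0r mul0r.
have [i ->] : exists i, p = (r.+1 + i)%N by exists (p - r.+1)%N; lia.
have -> : - (Posz r + 2) - Negz (r.+1 + i) = Posz i by rewrite NegzE; lia.
have nz : forall q, ((q`!)%:R : K) != 0 by move=> q; rewrite pnatr_eq0 -lt0n fact_gt0.
have P : \prod_(j < r.+1) ((Negz (r.+1+i) + (j.+1)%:Z)%:~R : K)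
    = (-1) ^+ r.+1 * ((r.+1 + i)`!)%:R / (i`!)%:R.
  transitivity (\prod_(j < r.+1) - (((r.+1 + i - j)%N)%:R : K)).
    apply: eq_bigr => j _; have hj := ltn_ord j.
    have -> : Negz (r.+1+i) + (j.+1)%:Z = - Posz (r.+1 + i - j)%N by rewrite NegzE; lia.
    by rewrite rmorphN.
  by rewrite prodrN card_ord -natr_prod -(fact_prod r.+1 i) natrM mulrA mulfK.
rewrite P !gbinomN risingD.
have -> : k + r%:R + 1 = k + (r.+1)%:R by rewrite mulrSr addrA.
rewrite !exprD.
set s := (-1) ^+ r.+1 : K.
have ss : s * s = 1.
  by rewrite /s -exprD addnn -mul2n exprM sqrrN !expr1n.
set R1 := rising k r.+1. set R2 := rising (k + (r.+1)%:R) i.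
set A := (-a) ^+ r.+1. set B := (-a) ^+ i. set S := (-1) ^+ i : K.
transitivity ((s * s) * (A * R1 * (S * R2 / (i`!)%:R * B))); last by rewrite ss mul1r.
by field; rewrite !nz.
Qed.
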